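(* Let $p$ be a prime and $b$ an integer with $0<b<p$. If $(p-b)(p-b^{-1})=2p+1$, then $|\mathrm{inv}_{1,b}|=5$.
   Context: Let $S=\mathbb{C}[x_1,x_2]$, $\zeta=e^{2\pi i/p}$, $G=\mathbb{Z}/p\mathbb{Z}=\langle\zeta\rangle$ acting on $S$ by $x_1\mapsto\zeta x_1$, $x_2\mapsto\zeta^bx_2$, with invariant ring $S^G_{1,b}$ (spanned by monomials $x_1^cx_2^d$ with $c+bd\equiv0\pmod p$). $\mathrm{inv}_{1,b}$ denotes the minimal set of monomial generators of $S^G_{1,b}$ as a $\mathbb{C}$-algebra: the nonconstant invariant monomials that are not a product of two nonconstant invariant monomials. $b^{-1}$ is the unique integer $0<b^{-1}<p$ with $bb^{-1}\equiv1\pmod p$. *)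

(* Defs.v *)
From mathcomp Require Import all_boot.
Set Implicit Arguments. Unset Strict Implicit. Unset Printing Implicit Defensive.

(* A monomial x1^c x2^d is encoded by its exponent pair (c, d). *)

(* x1^c x2^d is invariant under x1 |-> zeta x1, x2 |-> zeta^b x2 *)
Definition invariant_mon (p b : nat) (m : nat * nat) : bool :=
  (m.1 + b * m.2) %% p == 0.

Definition nonconst_mon (m : nat * nat) : bool := m != (0, 0).

(* m is a minimal monomial generator of S^G_{1,b}: a nonconstant invariant
   monomial that is not a product of two nonconstant invariant monomials. *)
Definition is_inv_gen (p b : nat) (m : nat * nat) : Prop :=
  [/\ invariant_mon p b m, nonconst_mon m &
   ~ exists m1 m2 : nat * nat,
       [/\ invariant_mon p b m1, nonconst_mon m1,
           invariant_mon p b m2, nonconst_mon m2 &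
           m = (m1.1 + m2.1, m1.2 + m2.2)]].

(* Main.v *)
Require Import Defs.
From Stdlib Require Import ZArith Lia.
From mathcomp Require Import all_boot zify.

Module Core.
Local Open Scope Z_scope.
Lemma zrange j p lo hi : 0 < p -> lo*p < j*p -> j*p < hi*p -> lo < j < hi.
Proof.
  intros Hp H1 H2; split.
  - apply (Z.mul_lt_mono_pos_r p); auto.
  - apply (Z.mul_lt_mono_pos_r p); auto.
Qed.

Lemma below_mid (a c p x y j m : Z) (ha : 1 <= a) (hc : 1 <= c) (hp : p = 2*a*c + a + c) (hj : j*p = (2*a+1)*y - x) (hm : m*p = (2*c+1)*x - y) (hx : 0 <= x) (hy : 0 <= y) : x <= a+1 -> y <= c+1 -> (x = 0 /\ y = 0) \/ (x = a+1 /\ y = c+1).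
Proof.
  intros H1 H2. assert (3*a+1 <= p) by (clear -ha hc hp; assert (a <= a*c) by nia; lia). assert (3*c+1 <= p) by (clear -ha hc hp; assert (c <= a*c) by nia; lia). assert (0 <= (2*a+1)*y) by (clear -ha hy; nia). assert (0 <= (2*c+1)*x) by (clear -hc hx; nia).
  assert ((2*a+1)*y <= (2*a+1)*(c+1)) by (apply Z.mul_le_mono_nonneg_l; lia).
  assert ((2*c+1)*x <= (2*c+1)*(a+1)) by (apply Z.mul_le_mono_nonneg_l; lia).
  assert (E1 : (2*a+1)*(c+1) = p + a + 1) by (subst p; ring).
  assert (E2 : (2*c+1)*(a+1) = p + c + 1) by (subst p; ring).
  assert (Hj : -1 < j < 2) by (apply (zrange j p); [lia| rewrite hj; clear hj hm hp; lia ..]).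
  assert (Hm : -1 < m < 2) by (apply (zrange m p); [lia| rewrite hm; clear hj hm hp; lia ..]).
  assert (j = 0 \/ j = 1) as [-> | ->] by lia;
  assert (m = 0 \/ m = 1) as [-> | ->] by lia.
  all: assert (EAC : (2*c+1)*(2*a+1) = 2*p+1) by (subst p; ring).
  - left. assert (x = (2*a+1)*y) by lia. subst x.
    assert (K : (2*c+1)*((2*a+1)*y) = (2*p+1)*y) by (rewrite hp; ring). rewrite K in hm. assert (y*p = 0) by lia.
    apply Z.mul_eq_0 in H7. lia.
  - exfalso. assert (x = (2*a+1)*y) by lia. subst x.
    assert (K : (2*c+1)*((2*a+1)*y) = (2*p+1)*y) by (rewrite hp; ring). rewrite K in hm. assert (p*(2*y - 1) = 0) by lia.
    apply Z.mul_eq_0 in H7. lia.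
  - exfalso. assert (y = (2*c+1)*x) by lia. subst y.
    assert (K : (2*a+1)*((2*c+1)*x) = (2*p+1)*x) by (rewrite hp; ring). rewrite K in hj. assert (p*(2*x - 1) = 0) by lia.
    apply Z.mul_eq_0 in H7. lia.
  - right. assert (y = (2*c+1)*x - p) by lia. subst y.
    assert (K : (2*a+1)*((2*c+1)*x - p) = (2*p+1)*x - (2*a+1)*p) by (rewrite hp; ring). rewrite K in hj.
    assert (p*(2*x - 2*a - 2) = 0) by lia.
    apply Z.mul_eq_0 in H7. split; lia.
Qed.

Lemma below_p0 (a c p x y j m : Z) (ha : 1 <= a) (hc : 1 <= c) (hp : p = 2*a*c + a + c) (hj : j*p = (2*a+1)*y - x) (hm : m*p = (2*c+1)*x - y) (hx : 0 <= x) (hy : 0 <= y) : x <= p -> y = 0 -> (x = 0 \/ x = p).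
Proof.
  intros H1 H2; subst y. assert (3*a+1 <= p) by (clear -ha hc hp; assert (a <= a*c) by nia; lia).
  assert (Hj : -2 < j < 1) by (apply (zrange j p); [lia| rewrite hj; clear hj hm hp; lia ..]).
  assert (j = 0 \/ j = -1) as [E | E] by lia; rewrite E in hj; lia.
Qed.

Lemma below_0p (a c p x y j m : Z) (ha : 1 <= a) (hc : 1 <= c) (hp : p = 2*a*c + a + c) (hj : j*p = (2*a+1)*y - x) (hm : m*p = (2*c+1)*x - y) (hx : 0 <= x) (hy : 0 <= y) : y <= p -> x = 0 -> (y = 0 \/ y = p).
Proof.
  intros H1 H2; subst x. assert (3*a+1 <= p) by (clear -ha hc hp; assert (a <= a*c) by nia; lia).
  assert (Hm : -2 < m < 1) by (apply (zrange m p); [lia| rewrite hm; clear hj hm hp; lia ..]).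
  assert (m = 0 \/ m = -1) as [E | E] by lia; rewrite E in hm; lia.
Qed.

Lemma below_A1 (a c p x y j m : Z) (ha : 1 <= a) (hc : 1 <= c) (hp : p = 2*a*c + a + c) (hj : j*p = (2*a+1)*y - x) (hm : m*p = (2*c+1)*x - y) (hx : 0 <= x) (hy : 0 <= y) : x <= 2*a+1 -> y <= 1 -> (x = 0 /\ y = 0) \/ (x = 2*a+1 /\ y = 1).
Proof.
  intros H1 H2. assert (3*a+1 <= p) by (clear -ha hc hp; assert (a <= a*c) by nia; lia). assert (0 <= (2*a+1)*y) by (clear -ha hy; nia).
  assert ((2*a+1)*y <= (2*a+1)*1) by (apply Z.mul_le_mono_nonneg_l; lia).
  assert (Hj : -1 < j < 1) by (apply (zrange j p); [lia| rewrite hj; clear hj hm hp; lia ..]).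
  assert (j = 0) as E by lia. rewrite E in hj.
  assert (y = 0 \/ y = 1) as [-> | ->] by lia; lia.
Qed.

Lemma below_1C (a c p x y j m : Z) (ha : 1 <= a) (hc : 1 <= c) (hp : p = 2*a*c + a + c) (hj : j*p = (2*a+1)*y - x) (hm : m*p = (2*c+1)*x - y) (hx : 0 <= x) (hy : 0 <= y) : x <= 1 -> y <= 2*c+1 -> (x = 0 /\ y = 0) \/ (x = 1 /\ y = 2*c+1).
Proof.
  intros H1 H2. assert (3*c+1 <= p) by (clear -ha hc hp; assert (c <= a*c) by nia; lia). assert (0 <= (2*c+1)*x) by (clear -hc hx; nia).
  assert ((2*c+1)*x <= (2*c+1)*1) by (apply Z.mul_le_mono_nonneg_l; lia).
  assert (Hm : -1 < m < 1) by (apply (zrange m p); [lia| rewrite hm; clear hj hm hp; lia ..]).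
  assert (m = 0) as E by lia. rewrite E in hm.
  assert (x = 0 \/ x = 1) as [-> | ->] by lia; lia.
Qed.

Lemma no_small (a c p x y j m : Z) (ha : 1 <= a) (hc : 1 <= c) (hp : p = 2*a*c + a + c) (hj : j*p = (2*a+1)*y - x) (hm : m*p = (2*c+1)*x - y) (hx : 0 <= x) (hy : 0 <= y) : 1 <= x <= 2*a -> 1 <= y <= 2*c -> x <= a \/ y <= c -> False.
Proof.
  intros H1 H2 [H3|H3].
  - assert ((2*c+1)*1 <= (2*c+1)*x) by (apply Z.mul_le_mono_nonneg_l; lia).
    assert ((2*c+1)*x <= (2*c+1)*a) by (apply Z.mul_le_mono_nonneg_l; lia).
    assert (E : (2*c+1)*a = p - c) by (subst p; ring).
    assert (Hm : 0 < m < 1) by (apply (zrange m p); [lia| rewrite hm; clear hj hm hp; lia ..]). lia.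
  - assert ((2*a+1)*1 <= (2*a+1)*y) by (apply Z.mul_le_mono_nonneg_l; lia).
    assert ((2*a+1)*y <= (2*a+1)*c) by (apply Z.mul_le_mono_nonneg_l; lia).
    assert (E : (2*a+1)*c = p - a) by (subst p; ring).
    assert (Hj : 0 < j < 1) by (apply (zrange j p); [lia| rewrite hj; clear hj hm hp; lia ..]). lia.
Qed.


Lemma paramZ (P B A C X Y K : Z) : P = 2*A*C+A+C -> B + 2*A+1 = P -> X + B*Y = K*P ->
  (Y-K)*P = (2*A+1)*Y - X /\ (2*Y - (2*C+1)*(Y-K))*P = (2*C+1)*X - Y.
Proof.
  intros h1 h2 h3. assert (X = K*P - B*Y) by lia. assert (B = P - 2*A - 1) by lia.
  subst X B P. split; ring.
Qed.
End Core.

Section Main.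
Variables (p b a c : nat).
Hypotheses (ha : 1 <= a) (hc : 1 <= c) (hp : p = 2*a*c+a+c) (hb : b + 2*a+1 = p).

Lemma param x y : invariant_mon p b (x,y) -> exists j m : Z,
  [/\ (j * Z.of_nat p = (2*Z.of_nat a+1)*Z.of_nat y - Z.of_nat x)%Z,
      (m * Z.of_nat p = (2*Z.of_nat c+1)*Z.of_nat x - Z.of_nat y)%Z,
      (1 <= Z.of_nat a)%Z, (1 <= Z.of_nat c)%Z &
      (Z.of_nat p = 2*Z.of_nat a*Z.of_nat c + Z.of_nat a + Z.of_nat c)%Z].
Proof.
  move=> H; have /dvdnP [k hk] : p %| x + b*y := H.
  have [h1 h2] := @Core.paramZ (Z.of_nat p) (Z.of_nat b) (Z.of_nat a) (Z.of_nat c)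
     (Z.of_nat x) (Z.of_nat y) (Z.of_nat k) ltac:(lia) ltac:(lia) ltac:(lia).
  by exists (Z.of_nat y - Z.of_nat k)%Z, (2*Z.of_nat y - (2*Z.of_nat c+1)*(Z.of_nat y - Z.of_nat k))%Z; split => //; lia.
Qed.

Lemma inv_of x y k : x + b*y = k*p -> invariant_mon p b (x,y).
Proof. by rewrite /invariant_mon /= => ->; rewrite modnMl. Qed.

Lemma inv_sub x y gx gy : invariant_mon p b (x,y) -> invariant_mon p b (gx,gy) ->
  gx <= x -> gy <= y -> invariant_mon p b (x-gx, y-gy).
Proof.
  rewrite /invariant_mon /= => h1 h2 hx hy.
  have e : x + b*y = (x - gx + b*(y-gy)) + (gx + b*gy).
    by have := leq_mul (leqnn b) hy; rewrite mulnBr; lia.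
  change (is_true (dvdn p (x - gx + b*(y-gy)))). change (is_true (dvdn p (gx + b*gy))) in h2.
  change (is_true (dvdn p (x + b*y))) in h1. by rewrite e dvdn_addl in h1.
Qed.

Definition gens := [:: (p,0); (2*a+1,1); (a+1,c+1); (1,2*c+1); (0,p)].

Lemma gensP g : g \in gens -> g = (p,0) \/ g = (2*a+1,1) \/ g = (a+1,c+1) \/ g = (1,2*c+1) \/ g = (0,p).
Proof.
  rewrite !inE => /orP [/eqP|/orP [/eqP|/orP [/eqP|/orP [/eqP|/eqP]]]]; tauto.
Qed.

Lemma gens_inv g : g \in gens -> invariant_mon p b g.
Proof.
  move/gensP => [->|[->|[->|[->|->]]]].
  - by apply: (@inv_of _ _ 1); lia.
  - by apply: (@inv_of _ _ 1); lia.
  - by apply: (@inv_of _ _ c); nia.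
  - by apply: (@inv_of _ _ (2*c-1)); nia.
  - by apply: (@inv_of _ _ b); lia.
Qed.

Lemma below g x y : g \in gens -> invariant_mon p b (x,y) -> x <= g.1 -> y <= g.2 ->
  (x,y) = (0,0) \/ (x,y) = g.
Proof.
  move=> hg /param [j [m [hj hm h1 h2 h3]]].
  move: hg; move/gensP => [->|[->|[->|[->|->]]]] /= hx hy.
  - have := @Core.below_p0 _ _ _ _ _ j m h1 h2 h3 hj hm ltac:(lia) ltac:(lia).
    move=> H; have [] := H ltac:(lia) ltac:(lia) => ?; [left|right]; f_equal; lia.
  - have := @Core.below_A1 _ _ _ _ _ j m h1 h2 h3 hj hm ltac:(lia) ltac:(lia).
    move=> H; have [] := H ltac:(lia) ltac:(lia) => ?; [left|right]; f_equal; lia.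
  - have := @Core.below_mid _ _ _ _ _ j m h1 h2 h3 hj hm ltac:(lia) ltac:(lia).
    move=> H; have [] := H ltac:(lia) ltac:(lia) => ?; [left|right]; f_equal; lia.
  - have := @Core.below_1C _ _ _ _ _ j m h1 h2 h3 hj hm ltac:(lia) ltac:(lia).
    move=> H; have [] := H ltac:(lia) ltac:(lia) => ?; [left|right]; f_equal; lia.
  - have := @Core.below_0p _ _ _ _ _ j m h1 h2 h3 hj hm ltac:(lia) ltac:(lia).
    move=> H; have [] := H ltac:(lia) ltac:(lia) => ?; [left|right]; f_equal; lia.
Qed.

Lemma gens_gen g : g \in gens -> is_inv_gen p b g.
Proof.
  move=> hg; split; first exact: gens_inv.
  - move: hg; rewrite /nonconst_mon => /gensP [->|[->|[->|[->|->]]]]; rewrite xpair_eqE; lia.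
  - move=> [[x1 y1] [[x2 y2] [i1 n1 i2 n2 e]]].
    subst g.
    have [] := @below _ x1 y1 hg i1 ltac:(simpl; lia) ltac:(simpl; lia).
    + by move=> E; rewrite E in n1.
    + case=> E1 E2; move: n2; rewrite /nonconst_mon /= xpair_eqE. lia.
Qed.

Lemma split_gen g x y : g \in gens -> invariant_mon p b (x,y) -> g.1 <= x -> g.2 <= y ->
  g != (x,y) -> ~ is_inv_gen p b (x,y).
Proof.
  move=> hg hi h1 h2 hne [_ _ H]; apply: H.
  exists g, (x - g.1, y - g.2); split.
  - exact: gens_inv.
  - move: hg; rewrite /nonconst_mon => /gensP [->|[->|[->|[->|->]]]]; rewrite xpair_eqE; lia.
  - by apply: inv_sub => //; case: g hg {hne h1 h2} => ?? /gens_inv.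
  - move: hne h1 h2; case: g {hg} => g1 g2; rewrite /nonconst_mon !xpair_eqE /= => hne h1 h2. lia.
  - move: h1 h2; case: g {hg hne} => g1 g2 /= h1 h2; f_equal; lia.
Qed.

Lemma gen_gens x y : is_inv_gen p b (x,y) -> (x,y) \in gens.
Proof.
  move=> G; apply/negPn/negP => hn. have [hi hnc _] := G.
  have nz : (x,y) != (0,0) by [].
  have [j [m [hj hm h1 h2 h3]]] := param _ _ hi.
  move: hnc; rewrite /nonconst_mon xpair_eqE => hnc.
  have T : forall g, g \in gens -> g.1 <= x -> g.2 <= y -> False.
    move=> g hg g1 g2.
    have hne : g != (x,y) by apply/eqP => E; rewrite -E hg in hn.
    exact: (split_gen g x y hg hi g1 g2 hne G).
  have I : forall i : 'I_5, nth (0,0) gens i \in gens by move=> i; apply: mem_nth; rewrite /= ltn_ord.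
  case: (leqP p x) => [px|xp]; first by apply: (T _ (I ord0)) => /=; lia.
  case: (leqP p y) => [py|yp]; first by apply: (T _ (I (@Ordinal 5 4 isT))) => /=; lia.
  case: (posnP x) => [x0|xpos].
    have := @Core.below_0p _ _ _ _ _ j m h1 h2 h3 hj hm ltac:(lia) ltac:(lia) ltac:(lia) ltac:(lia).
    lia.
  case: (posnP y) => [y0|ypos].
    have := @Core.below_p0 _ _ _ _ _ j m h1 h2 h3 hj hm ltac:(lia) ltac:(lia) ltac:(lia) ltac:(lia).
    lia.
  case: (leqP (2*a+1) x) => [ax|xa]; first by apply: (T _ (I (@Ordinal 5 1 isT))) => /=; lia.
  case: (leqP (2*c+1) y) => [cy|yc]; first by apply: (T _ (I (@Ordinal 5 3 isT))) => /=; lia.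
  case: (leqP (a+1) x) => [ax2|xa2].
    case: (leqP (c+1) y) => [cy2|yc2]; first by apply: (T _ (I (@Ordinal 5 2 isT))) => /=; lia.
    apply: (@Core.no_small _ _ _ _ _ j m h1 h2 h3 hj hm); lia.
  apply: (@Core.no_small _ _ _ _ _ j m h1 h2 h3 hj hm); lia.
Qed.
End Main.

Theorem proposition5p1 (p b binv : nat) :
  prime p -> 0 < b < p ->
  0 < binv < p -> (b * binv) %% p = 1 %% p ->
  (p - b) * (p - binv) = 2 * p + 1 ->
  exists s : seq (nat * nat),
    [/\ uniq s, (forall m, m \in s <-> is_inv_gen p b m) & size s = 5].
Proof.
  move=> _ hb hbi _ hAC.
  set A := p - b in hAC; set C := p - binv in hAC.
  have oA : odd A /\ odd C.
    by apply/andP; rewrite -oddM hAC oddD oddM.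
  have eA := odd_double_half A; have eC := odd_double_half C.
  rewrite (proj1 oA) in eA; rewrite (proj2 oA) in eC.
  set a := A./2 in eA; set c := C./2 in eC.
  have hA : A = 2*a+1 by rewrite -eA -muln2; lia.
  have hC : C = 2*c+1 by rewrite -eC -muln2; lia.
  have hp : p = 2*a*c+a+c by rewrite hA hC in hAC; nia.
  have ha : 1 <= a.
    case: (posnP a) => // a0; rewrite a0 in hp hA; rewrite /C in hC; lia.
  have hc : 1 <= c.
    case: (posnP c) => // c0; rewrite c0 in hp hC; rewrite /A in hA; lia.
  have hb' : b + 2*a+1 = p by rewrite /A in hA; lia.
  exists (gens p a c); split.
  - rewrite /gens /= !inE !xpair_eqE; lia.
  - case=> x y; split; first exact: gens_gen.
    exact: gen_gens.
  - by [].
Qed.
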